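(* Let $G$ be a graph on $n$ vertices with treewidth $t$, and let $(\{X_i : i\in I\}, r, T)$ be a normalized tree decomposition of $G$ of width $t$. Then there exists $l \in I$ such that $V(G)\setminus X_l$ can be partitioned into three (possibly empty) sets $V_1, V_2, V_3$ such that $G$ has no edge between $V_i$ and $V_j$ for $i\neq j$, and $|V_i| \leq \frac12\left(n - |X_l| + 1\right)$ for each $i\in\{1,2,3\}$.
   Context: A tree decomposition of $G$ is a pair $(\{X_i : i\in I\}, T)$ where $T$ is a tree with node set $I$ and each $X_i\subseteq V(G)$, such that: (1) $\bigcup_{i\in I} X_i = V(G)$; (2) for every edge $\{u,v\}\in E(G)$ there is $i\in I$ with $u,v\in X_i$; (3) for all $i,j,k\in I$, if $j$ lies on the path in $T$ from $i$ to $k$, then $X_i\cap X_k\subseteq X_j$. Its width is $\max_{i\in I}|X_i| - 1$, and the treewidth of $G$ is the minimum width over all tree decompositions of $G$. A normalized tree decomposition is a triple $(\{X_i : i\in I\}, r, T)$ where $(\{X_i\},T)$ is a tree decomposition, $T$ is rooted at $r\in I$, $|X_r| = 1$, and for every node $i$ and every child $i'$ of $i$, the symmetric difference of $X_{i'}$ and $X_i$ has exactly one element. *)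

(* Defs.v *)
From mathcomp Require Import all_boot.
Set Implicit Arguments. Unset Strict Implicit. Unset Printing Implicit Defensive.

Definition simple_graph (V : finType) (e : rel V) : Prop :=
  symmetric e /\ irreflexive e.

(* a cycle: x, p_1, ..., p_k (k >= 2) pairwise distinct, consecutive adjacent,
   and p_k adjacent to x *)
Definition acyclic (I : finType) (te : rel I) : Prop :=
  forall (x : I) (p : seq I),
    ~~ [&& 1 < size p, uniq (x :: p), path te x p & te (last x p) x].

Definition is_tree (I : finType) (te : rel I) : Prop :=
  [/\ symmetric te, irreflexive te, 0 < #|I|,
      (forall i j : I, connect te i j) & acyclic te].

Definition on_path (I : finType) (te : rel I) (i j k : I) : Prop :=
  exists p : seq I,
    [&& path te i p, last i p == k, uniq (i :: p) & j \in i :: p].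

Definition is_tree_decomp (V : finType) (e : rel V)
    (I : finType) (te : rel I) (X : I -> {set V}) : Prop :=
  [/\ is_tree te,
      (forall v : V, exists i : I, v \in X i),
      (forall u v : V, e u v -> exists i : I, (u \in X i) && (v \in X i)) &
      (forall i j k : I, on_path te i j k -> X i :&: X k \subset X j)].

Definition width (V I : finType) (X : I -> {set V}) : nat :=
  (\max_(i : I) #|X i|) - 1.

Definition is_treewidth (V : finType) (e : rel V) (t : nat) : Prop :=
  (exists (I : finType) (te : rel I) (X : I -> {set V}),
      is_tree_decomp e te X /\ width X = t) /\
  (forall (I : finType) (te : rel I) (X : I -> {set V}),
      is_tree_decomp e te X -> t <= width X).

Definition child (I : finType) (te : rel I) (r i i' : I) : Prop :=
  te i i' /\ on_path te r i i'.

Definition normalized_tree_decomp (V : finType) (e : rel V)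
    (I : finType) (te : rel I) (r : I) (X : I -> {set V}) : Prop :=
  [/\ is_tree_decomp e te X, #|X r| = 1 &
      (forall i i' : I, child te r i i' ->
         #|(X i' :\: X i) :|: (X i :\: X i')| = 1)].

(* Main.v *)
Require Import Defs.
From mathcomp Require Import all_boot zify.
Set Implicit Arguments. Unset Strict Implicit. Unset Printing Implicit Defensive.

Definition tavoid (I : finType) (te : rel I) (l : I) : rel I :=
  [rel x y | [&& te x y, x != l & y != l]].
Definition branch (I : finType) (te : rel I) (l c : I) : {set I} :=
  [set j | connect (tavoid te l) c j].

Lemma upath (I : finType) (te : rel I) i j : connect te i j ->
  exists p, [&& path te i p, last i p == j & uniq (i :: p)].
Proof.
move=> /connectP [p pp ->]; case: (shortenP pp) => p' pp' up' _.
by exists p'; rewrite pp' up' eqxx.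
Qed.

Lemma avoid_path (I : finType) (te : rel I) l x p :
  path te x p -> l \notin x :: p -> path (tavoid te l) x p.
Proof.
elim: p x => //= y p IH x /andP [exy pp]; rewrite !inE !negb_or => /and3P [xl yl lp].
apply/andP; split; first by rewrite /tavoid /= exy eq_sym xl eq_sym yl.
by apply: IH => //; rewrite inE negb_or yl.
Qed.

Lemma avoid_notin (I : finType) (te : rel I) l x p :
  path (tavoid te l) x p -> l \notin p.
Proof.
elim: p x => //= y p IH x /andP [/and3P [_ _ yl] pp].
by rewrite inE negb_or eq_sym yl (IH _ pp).
Qed.

Lemma avoid_sub (I : finType) (te : rel I) l : subrel (tavoid te l) te.
Proof. by move=> x y /and3P []. Qed.

Lemma branch_of_path (I : finType) (te : rel I) l q1 q :
  path te l (q1 :: q) -> uniq (l :: q1 :: q) ->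
  te l q1 /\ last q1 q \in branch te l q1.
Proof.
move=> /= /andP [t1 pq] /andP [lq _]; split => //.
rewrite inE; apply/connectP; exists q => //.
exact: avoid_path.
Qed.

Lemma branch_disj (I : finType) (te : rel I) l c1 c2 j :
  is_tree te -> te l c1 -> te l c2 -> c1 != c2 ->
  j \in branch te l c1 -> j \in branch te l c2 -> False.
Proof.
move=> [tsym tirr _ _ tacyc] t1 t2 c12; rewrite !inE => j1 j2.
have asym : symmetric (tavoid te l).
  by move=> x y; rewrite /tavoid /= tsym; case: (x != l); case: (y != l); rewrite ?andbF.
have : connect (tavoid te l) c1 c2.
  apply: connect_trans j1 _; by rewrite (sym_connect_sym asym).
move=> /upath [p /and3P [pp /eqP lp up]].
have := tacyc l (c1 :: p); rewrite /=.
have c1l : c1 != l by apply/eqP => E; move: t1; rewrite E tirr.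
have pne : p != [::] by apply/eqP => E; move: lp c12; rewrite E /= => ->; rewrite eqxx.
rewrite lp (tsym c2 l) t2 t1 (sub_path (@avoid_sub _ te l) pp).
move: up => /= /andP [-> ->].
rewrite inE negb_or eq_sym c1l (avoid_notin pp).
by case: p pne {pp lp}.
Qed.

Lemma branch_closed (V : finType) (e : rel V) (I : finType) (te : rel I)
  (X : I -> {set V}) l c i j v : is_tree_decomp e te X ->
  v \notin X l -> v \in X i -> v \in X j -> i \in branch te l c -> j \in branch te l c.
Proof.
move=> [[_ _ _ tconn _] _ _ Hp] vl vi vj; rewrite !inE => ci.
have [p /and3P [pp /eqP lp up]] := upath (tconn i j).
case: (boolP (l \in i :: p)) => li.
  have : X i :&: X j \subset X l.
    by apply: Hp; exists p; apply/and4P; split => //; rewrite lp.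
  by move/subsetP/(_ v); rewrite inE vi vj (negbTE vl) => /(_ isT).
apply: connect_trans ci _; apply/connectP; exists p => //; exact: avoid_path.
Qed.

Lemma child_or (I : finType) (te : rel I) r l c :
  is_tree te -> te l c -> child te r l c \/ child te r c l.
Proof.
move=> [tsym _ _ tconn _] tlc.
have [p /and3P [pp /eqP lp up]] := upath (tconn r l).
case: (boolP (c \in r :: p)) => cp.
  right; split; first by rewrite tsym.
  by exists p; apply/and4P; split => //; rewrite lp.
left; split => //; exists (rcons p c); apply/and4P; split.
- by rewrite rcons_path pp lp tlc.
- by rewrite last_rcons.
- by rewrite -rcons_cons rcons_uniq cp up.
- by rewrite -rcons_cons mem_rcons inE -lp mem_last orbT.
Qed.

Lemma cardsU_disj (T : finType) (A B : {set T}) :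
  A :&: B = set0 -> #|A :|: B| = #|A| + #|B|.
Proof. by move=> H; rewrite cardsU H cards0 subn0. Qed.

Lemma no_edge3 (V : finType) (e : rel V) (V1 V2 V3 : {set V}) : symmetric e ->
  (forall u v, u \in V1 -> v \in V2 -> ~~ e u v) ->
  (forall u v, u \in V1 -> v \in V3 -> ~~ e u v) ->
  (forall u v, u \in V2 -> v \in V3 -> ~~ e u v) ->
  (forall (i j : 'I_3) (Vs := [:: V1; V2; V3]) (u v : V),
            i != j -> u \in nth set0 Vs i -> v \in nth set0 Vs j -> ~~ e u v).
Proof.
move=> sym H12 H13 H23 [[|[|[|i]]] Hi] [[|[|[|j]]] Hj] //= u v _ Hu Hv;
  first [ by eauto | by rewrite sym; eauto ].
Qed.

Lemma fcycle_ex (T : finType) (f : T -> T) (x : T) :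
  exists y p, [&& uniq (y :: p), path (frel f) y p & f (last y p) == y].
Proof.
have Hu := orbit_uniq f x.
have Ho : orbit f x = x :: traject f (f x) (order f x).-1.
  by rewrite /orbit -orderSpred.
have Hp : path (frel f) x (traject f (f x) (order f x).-1) := fpath_traject f x _.
have Hl : f (last x (traject f (f x) (order f x).-1)) \in x :: traject f (f x) (order f x).-1.
  by rewrite -Ho; apply: mem_orbit; rewrite Ho mem_last.
move: Hu Hp Hl; rewrite Ho; move: (traject _ _ _) => q Hu Hp Hl.
have [y Ey] : {y | f (last x q) = y} by exists (f (last x q)).
rewrite Ey in Hl.
move Es : (x :: q) Hl Hu => s Hl; move: Es; case/splitPr: Hl => o1 o2 Es Hu.
exists y, o2.
have Hu2 : uniq (y :: o2) by move: Hu; rewrite cat_uniq => /and3P [_ _ ->].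
rewrite Hu2 /=.
case: o1 Es {Hu} => [|z o1] /= [E1 E2].
  by rewrite -E1 -E2 Hp Ey E1 eqxx.
rewrite E2 in Hp Ey.
move: Hp; rewrite cat_path => /andP [_ /= /andP [_ ->]].
by rewrite last_cat /= in Ey; rewrite Ey eqxx.
Qed.

Definition Aset (V : finType) (I : finType) (te : rel I) (X : I -> {set V}) (l c : I)
  : {set V} := [set v | (v \notin X l) && [exists i in branch te l c, v \in X i]].

Lemma main_sep (V : finType) (e : rel V) (I : finType) (te : rel I) (r : I)
    (X : I -> {set V}) :
  simple_graph e ->
  normalized_tree_decomp e te r X ->
  exists (l : I) (V1 V2 V3 : {set V}),
    [/\ V1 :|: V2 :|: V3 = ~: X l,
        [/\ [disjoint V1 & V2], [disjoint V1 & V3] & [disjoint V2 & V3]],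
        (forall (i j : 'I_3) (Vs := [:: V1; V2; V3]) (u v : V),
            i != j -> u \in nth set0 Vs i -> v \in nth set0 Vs j -> ~~ e u v) &
        [/\ 2 * #|V1| <= #|V| - #|X l| + 1,
            2 * #|V2| <= #|V| - #|X l| + 1 &
            2 * #|V3| <= #|V| - #|X l| + 1]].
Proof.
move=> [esym eirr] [Hd Hr Hnorm].
have Hd' := Hd; case: Hd' => [Htree Hcov Hedge Hpath].
have Htree' := Htree; case: Htree' => [tsym tirr tpos tconn tacyc].
pose A := Aset te X.
have Ain : forall l c v, (v \in A l c) = (v \notin X l) && [exists i in branch te l c, v \in X i].
  by move=> l c v; rewrite /A /Aset inE.
have AnX : forall l c v, v \in A l c -> v \notin X l.
  by move=> l c v; rewrite Ain => /andP [].
have Acov : forall l v, v \notin X l -> exists2 c, te l c & v \in A l c.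
  move=> l v vl; have [i vi] := Hcov v.
  have il : i != l by apply: contraNneq vl => <-.
  have [p /and3P [pp /eqP lp up]] := upath (tconn l i).
  case: p pp lp up => [|q1 q] pp lp up; first by move: il; rewrite -lp /= eqxx.
  have [t1 hb] := branch_of_path pp up.
  rewrite /= in lp; rewrite lp in hb.
  exists q1 => //; rewrite Ain vl /=; apply/existsP; exists i; by rewrite hb vi.
have Adisj : forall l c1 c2 v, te l c1 -> te l c2 -> c1 != c2 ->
    v \in A l c1 -> v \in A l c2 -> False.
  move=> l c1 c2 v t1 t2 c12; rewrite !Ain.
  move=> /andP [vl /existsP [i /andP [i1 vi]]] /andP [_ /existsP [j /andP [j2 vj]]].
  exact: (branch_disj Htree t1 t2 c12 i1 (branch_closed Hd vl vj vi j2)).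
have Anoedge : forall l c1 c2 u v, te l c1 -> te l c2 -> c1 != c2 ->
    u \in A l c1 -> v \in A l c2 -> ~~ e u v.
  move=> l c1 c2 u v t1 t2 c12; rewrite !Ain.
  move=> /andP [ul /existsP [i /andP [i1 ui]]] /andP [vl /existsP [j /andP [j2 vj]]].
  apply/negP => euv; have [k /andP [uk vk]] := Hedge u v euv.
  exact: (branch_disj Htree t1 t2 c12 (branch_closed Hd ul ui uk i1)
                                      (branch_closed Hd vl vj vk j2)).
have AA : forall l c, te l c -> #|A l c| + #|A c l| + #|X l :&: X c| <= #|V|.
  move=> l c tlc.
  have H1 : A l c :&: A c l = set0.
    apply/setP => v; rewrite in_setI in_set0; apply/negbTE/negP => /andP [].
    rewrite !Ain => /andP [vl /existsP [i /andP [ib vi]]] /andP [vc /existsP [j /andP [jb vj]]].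
    have jb' := branch_closed Hd vl vi vj ib.
    move: jb; rewrite inE => /upath [p /and3P [pp /eqP lp up]].
    have jl : j != l by apply: contraNneq vl => <-.
    case: p pp lp up => [|q1 q] pp lp up; first by move: jl; rewrite -lp /= eqxx.
    have [t1 hb] := branch_of_path (sub_path (@avoid_sub _ te c) pp) up.
    rewrite /= in lp; rewrite lp in hb.
    have q1c : q1 != c by move: pp => /= /andP [/and3P [_ _ ->]].
    exact: (branch_disj Htree t1 tlc q1c hb jb').
  have H2 : (A l c :|: A c l) :&: (X l :&: X c) = set0.
    apply/setP => v; rewrite !in_setI in_setU in_set0; apply/negbTE/negP.
    by move=> /andP [/orP [/AnX H|/AnX H] /andP [H3 H4]]; rewrite ?H3 ?H4 in H.
  by rewrite -(cardsU_disj H1) -(cardsU_disj H2) max_card.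
have XX : forall l c, te l c -> #|X l| + #|X c| = 2 * #|X l :&: X c| + 1.
  move=> l c tlc.
  have K1 : (X c :\: X l) :&: (X l :\: X c) = set0.
    by apply/setP => v; rewrite !inE; do 2 case: (_ \in _).
  have K2 : (X l :\: X c) :&: (X c :\: X l) = set0.
    by apply/setP => v; rewrite !inE; do 2 case: (_ \in _).
  have H : #|X c :\: X l| + #|X l :\: X c| = 1.
    case: (child_or r Htree tlc) => /Hnorm.
      by rewrite (cardsU_disj K1).
    by rewrite (cardsU_disj K2) addnC.
  have := cardsID (X c) (X l); have := cardsID (X l) (X c).
  rewrite (setIC (X c) (X l)); lia.
pose bad l c := te l c && (#|V| - #|X l| + 1 < 2 * #|A l c|).
have no2 : forall l c, bad l c -> bad c l -> False.
  move=> l c /andP [tlc H1] /andP [_ H2].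
  have := AA l c tlc; have := XX l c tlc.
  have : #|X l| <= #|V| := max_card _; have : #|X c| <= #|V| := max_card _.
  lia.
case: (boolP [exists l, [forall c, ~~ bad l c]]).
  move=> /existsP [l /forallP Hl].
  have Hgood : forall c, te l c -> 2 * #|A l c| <= #|V| - #|X l| + 1.
    by move=> c tlc; have := Hl c; rewrite /bad tlc /= -leqNgt.
  pose N := [set c | te l c].
  pose U (S : {set I}) := \bigcup_(c in S) A l c.
  have UnX : forall S v, v \in U S -> v \notin X l.
    by move=> S v /bigcupP [c _ /AnX].
  pose P := fun S : {set I} => (S \subset N) && (2 * #|U S| <= #|V| - #|X l| + 1).
  pose F := fun S : {set I} => #|U S| * #|I|.+1 + #|S|.
  have P0 : P set0 by rewrite /P sub0set /U big_set0 cards0.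
  case: (@arg_maxnP _ set0 P F P0) => S /andP [SN SP] Smax.
  have SN' : forall c, c \in S -> te l c.
    by move=> c cS; have := subsetP SN c cS; rewrite inE.
  case: (boolP (N \subset S)) => NS.
    exists l, (U S), set0, set0; split.
    - rewrite !setU0; apply/setP => v; rewrite in_setC; apply/idP/idP => [/UnX //|vl].
      have [c tlc vc] := Acov l v vl.
      apply/bigcupP; exists c => //; apply: (subsetP NS); by rewrite inE.
    - by split; rewrite -setI_eq0 ?setI0 ?set0I.
    - by apply: no_edge3 => // u v; rewrite in_set0.
    - by rewrite cards0; split.
  move: NS => /subsetPn [c0 c0N c0S].
  have t0 : te l c0 by rewrite inE in c0N.
  exists l, (U S), (A l c0), (~: X l :\: (U S :|: A l c0)); split.
  - apply/setP => v; rewrite !in_setU !in_setD !in_setU !in_setC.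
    case: (boolP (v \in U S)) => [/UnX -> //|_].
    by case: (boolP (v \in A l c0)) => [/AnX -> //|_].
  - split.
    + rewrite -setI_eq0; apply/eqP/setP => v; rewrite in_setI in_set0.
      apply/negbTE/negP => /andP [/bigcupP [c cS vc] vc0].
      have cc0 : c != c0 by apply/eqP => E; rewrite -E cS in c0S.
      exact: (Adisj l c c0 v (SN' c cS) t0 cc0 vc vc0).
    + rewrite -setI_eq0; apply/eqP/setP => v; rewrite in_setI in_setD in_setU in_set0.
      by case: (v \in U S).
    + rewrite -setI_eq0; apply/eqP/setP => v; rewrite in_setI in_setD in_setU in_set0.
      by case: (v \in U S); case: (v \in A l c0).
  - apply: no_edge3 => //.
    + move=> u v /bigcupP [c cS uc] vc0.
      have cc0 : c != c0 by apply/eqP => E; rewrite -E cS in c0S.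
      exact: (Anoedge l c c0 u v (SN' c cS) t0 cc0).
    + move=> u v /bigcupP [c cS uc]; rewrite in_setD in_setU in_setC negb_or.
      move=> /andP [/andP [vS _] vl]; have [c' t' vc'] := Acov l v vl.
      have cc' : c != c'.
        apply/eqP => E; rewrite -E in vc'; move: vS; apply/negP; rewrite negbK.
        by apply/bigcupP; exists c.
      exact: (Anoedge l c c' u v (SN' c cS) t').
    + move=> u v uc0; rewrite in_setD in_setU in_setC negb_or.
      move=> /andP [/andP [_ vA] vl]; have [c' t' vc'] := Acov l v vl.
      have cc' : c0 != c' by apply/eqP => E; rewrite -E in vc'; rewrite vc' in vA.
      exact: (Anoedge l c0 c' u v t0 t').
  - split; first exact: SP; first exact: Hgood.
    have US' : U (c0 |: S) = U S :|: A l c0.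
      apply/setP => v; rewrite in_setU; apply/bigcupP/orP => [[c]|[vS|vc0]].
      + rewrite in_setU1 => /orP [/eqP -> |cS] vc; [by right|left].
        by apply/bigcupP; exists c.
      + move: vS => /bigcupP [c cS vc]; exists c => //; by rewrite in_setU1 cS orbT.
      + by exists c0 => //; rewrite in_setU1 eqxx.
    have nP : ~~ P (c0 |: S).
      apply/negP => HP; have := Smax _ HP; rewrite /F US' cardsU1 c0S.
      have := leq_mul (subset_leq_card (subsetUl (U S) (A l c0))) (leqnn #|I|.+1).
      simpl; move=> H1 H2.
      move: H1 H2; set x := _ * _; set y := _ * _; move=> H1 H2; clear -H1 H2.
      lia.
    move: nP; rewrite /P subUset sub1set c0N SN /= -ltnNge US' => HU.
    have sub : U S :|: A l c0 \subset ~: X l.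
      by apply/subsetP => v; rewrite in_setC in_setU => /orP [/UnX|/AnX].
    rewrite cardsD (setIidPr sub).
    have := cardsC (X l); move: HU; set z := #|U S :|: A l c0|; clearbody z; clear.
    move: #|V| #|X l| #|~: X l| => a b c; lia.
move=> /existsPn Hall.
have Hb : forall l, exists c, bad l c.
  move=> l; have := Hall l; move/forallPn => [c]; rewrite negbK; eauto.
pose f l := odflt l [pick c | bad l c].
have Hf : forall l, bad l (f l).
  move=> l; rewrite /f; case: pickP => [c //|H0].
  by have [c Hc] := Hb l; rewrite H0 in Hc.
have Tf : forall a b, frel f a b -> te a b.
  by move=> a b /eqP <-; case/andP: (Hf a).
have [x0 [p /and3P [Hu pp /eqP lp]]] := fcycle_ex f r.
exfalso; apply: (negP (tacyc x0 p)); apply/and4P; split => //.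
- case: p pp lp Hu => [|y [|z q]] //=.
    by move=> _ E; have := Tf x0 x0 (introT eqP E); rewrite tirr.
  move=> /andP [/eqP E1 _] E2 _; exfalso.
  by apply: (no2 x0 y); [rewrite -E1 | rewrite -E2].
- exact: (sub_path Tf pp).
- by apply: Tf; rewrite /= lp.
Qed.

Theorem lemma3 (V : finType) (e : rel V) (t : nat)
    (I : finType) (te : rel I) (r : I) (X : I -> {set V}) :
  simple_graph e ->
  is_treewidth e t ->
  normalized_tree_decomp e te r X ->
  width X = t ->
  exists (l : I) (V1 V2 V3 : {set V}),
    [/\ V1 :|: V2 :|: V3 = ~: X l,
        [/\ [disjoint V1 & V2], [disjoint V1 & V3] & [disjoint V2 & V3]],
        (forall (i j : 'I_3) (Vs := [:: V1; V2; V3]) (u v : V),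
            i != j -> u \in nth set0 Vs i -> v \in nth set0 Vs j -> ~~ e u v) &
        [/\ 2 * #|V1| <= #|V| - #|X l| + 1,
            2 * #|V2| <= #|V| - #|X l| + 1 &
            2 * #|V3| <= #|V| - #|X l| + 1]].
Proof. by move=> Hs _ Hn _; exact: main_sep Hs Hn. Qed.
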